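(* Let $\pi$ be a projective plane of order $q$ and let $n$ be an integer with $2\le q-n\le q$. Let $\phi$ be an embedding of the complete bipartite graph $G=K_{q-n,q}$ into $\pi$, with vertex classes $U,V$, $|U|=q-n$, $|V|=q$. If $q>n^2$, then the points $\phi(U\cup V)$ lie on the union of two lines of $\pi$.
   Context: A finite projective plane of order $q$ has $q^2+q+1$ points and lines, $q+1$ points on each line and $q+1$ lines through each point; any two distinct points lie on a unique line and any two lines meet in a unique point. An embedding of a simple graph $G=(V,E)$ into $\pi$ is an injective map $\phi$ from $V$ to the points of $\pi$ such that the induced map sending an edge $ab$ to the line through $\phi(a),\phi(b)$ is injective on $E$. *)

(* Defs.v *)
From mathcomp Require Import all_boot.
Set Implicit Arguments. Unset Strict Implicit. Unset Printing Implicit Defensive.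

Definition projective_plane (P L : finType) (inc : P -> L -> bool) (q : nat) : Prop :=
  [/\ #|P| = q ^ 2 + q + 1 /\ #|L| = q ^ 2 + q + 1,
      (forall l : L, #|[set p | inc p l]| = q.+1),
      (forall p : P, #|[set l | inc p l]| = q.+1),
      (forall p1 p2 : P, p1 != p2 ->
         exists! l : L, inc p1 l && inc p2 l)
    & (forall l1 l2 : L, l1 != l2 ->
         exists! p : P, inc p l1 && inc p l2)].

Definition pjoin (P L : finType) (inc : P -> L -> bool) (p1 p2 : P) : option L :=
  [pick l | inc p1 l && inc p2 l].

(* Vertex set of the complete bipartite graph K_{a,b}: classes U = 'I_a, V = 'I_b;
   edges are exactly the pairs {inl u, inr v}. *)
Definition Kvert (a b : nat) : finType := ('I_a + 'I_b)%type.

Definition embedding_Kab (P L : finType) (inc : P -> L -> bool) (a b : nat)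
    (phi : Kvert a b -> P) : Prop :=
  injective phi /\
  (forall (u u' : 'I_a) (v v' : 'I_b),
     pjoin inc (phi (inl u)) (phi (inr v)) = pjoin inc (phi (inl u')) (phi (inr v')) ->
     u = u' /\ v = v').

(* Main.v *)
Require Import Defs.
From mathcomp Require Import all_boot.
From mathcomp Require Import zify.
Set Implicit Arguments. Unset Strict Implicit. Unset Printing Implicit Defensive.

Section Plane.
Variables (P L : finType) (inc : P -> L -> bool) (q : nat).
Hypothesis pp : projective_plane inc q.

Lemma line_uniq p1 p2 l l' : p1 != p2 -> inc p1 l -> inc p2 l ->
  inc p1 l' -> inc p2 l' -> l = l'.
Proof.
case: pp => _ _ _ H _ n12 a1 a2 b1 b2.
case: (H _ _ n12) => l0 [_ U].
have e1 := U l (introT andP (conj a1 a2)).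
have e2 := U l' (introT andP (conj b1 b2)).
by rewrite -e1 -e2.
Qed.

Lemma point_uniq l1 l2 p p' : l1 != l2 -> inc p l1 -> inc p l2 ->
  inc p' l1 -> inc p' l2 -> p = p'.
Proof.
case: pp => _ _ _ _ H n12 a1 a2 b1 b2.
case: (H _ _ n12) => l0 [_ U].
have e1 := U p (introT andP (conj a1 a2)).
have e2 := U p' (introT andP (conj b1 b2)).
by rewrite -e1 -e2.
Qed.

Lemma pick_join (d : L) p1 p2 : p1 != p2 ->
  let l := odflt d [pick l | inc p1 l && inc p2 l] in inc p1 l && inc p2 l.
Proof.
case: pp => _ _ _ H _ n12 /=.
case: pickP => [l -> //|H0].
case: (H _ _ n12) => l0 [h _]; by rewrite H0 in h.
Qed.

Lemma pick_meet (d : P) l1 l2 : l1 != l2 ->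
  let p := odflt d [pick p | inc p l1 && inc p l2] in inc p l1 && inc p l2.
Proof.
case: pp => _ _ _ _ H n12 /=.
case: pickP => [l -> //|H0].
case: (H _ _ n12) => l0 [h _]; by rewrite H0 in h.
Qed.

Lemma pjoin_eq p1 p2 l : p1 != p2 -> inc p1 l -> inc p2 l -> pjoin inc p1 p2 = Some l.
Proof.
move=> n12 a1 a2; rewrite /pjoin; case: pickP => [l' /andP[b1 b2]|H0].
  by congr Some; apply: (line_uniq n12).
by have := H0 l; rewrite a1 a2.
Qed.

Lemma exists_join p1 p2 : p1 != p2 -> exists l, inc p1 l && inc p2 l.
Proof. case: pp => _ _ _ H _ n12; by case: (H _ _ n12) => l [h _]; exists l. Qed.

End Plane.

Lemma ar1 (a b q : nat) : a = true + b -> q.+1 = true + a -> q <= b -> False.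
Proof. lia. Qed.
Lemma ar2 (a q n : nat) : n <= q -> q.+1 = true + a -> a - (q - n) <= n.
Proof. lia. Qed.
Lemma ar3 (a b n : nat) : a = true + b -> a <= n -> b <= n - 1.
Proof. lia. Qed.
Lemma ar4 (q x : nat) : q = true + x -> q - 1 = x.
Proof. lia. Qed.
Lemma ar5 (q n : nat) : 1 < q - n -> n <= q.
Proof. lia. Qed.
Lemma ar6 (q n : nat) : 1 < q - n -> 0 < q.
Proof. lia. Qed.
Lemma ar7 (q n : nat) : n <= q -> q.+1 - (q - n) = n.+1.
Proof. lia. Qed.
Lemma ar8 (q n : nat) : 1 < q - n -> n ^ 2 < q -> q - 1 <= n.+1 * (n - 1) -> False.
Proof.
case: n => [|k]; first by rewrite mul1n; lia.
rewrite subn1 /= => H1 H2 H3.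
have e2 : k.+1 ^ 2 = k.+1 * k.+1 by rewrite expnS expn1.
rewrite e2 in H2. nia.
Qed.

Theorem theorem3p9 (P L : finType) (inc : P -> L -> bool) (q n : nat)
    (phi : Kvert (q - n) q -> P) :
  projective_plane inc q ->
  2 <= q - n <= q ->
  embedding_Kab inc phi ->
  n ^ 2 < q ->
  exists l1 l2 : L, forall x : Kvert (q - n) q, inc (phi x) l1 || inc (phi x) l2.
Proof.
move=> pp /andP[Hqn Hnq] [phi_inj emb] Hn2.
pose uU (u : 'I_(q - n)) := phi (inl u).
pose vV (v : 'I_q) := phi (inr v).
have uv_neq u v : uU u != vV v by apply/eqP => /phi_inj.
have vv_inj : injective vV by move=> x y /phi_inj [].
have uu_inj : injective uU by move=> x y /phi_inj [].
have F1 u v l : inc (uU u) l -> inc (vV v) l ->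
   (forall u', inc (uU u') l -> u' = u) /\ (forall v', inc (vV v') l -> v' = v).
{ move=> hu hv; split=> [u' hu'|v' hv'].
  - have e1 : pjoin inc (uU u') (vV v) = Some l := pjoin_eq pp (uv_neq _ _) hu' hv.
    have e2 : pjoin inc (uU u) (vV v) = Some l := pjoin_eq pp (uv_neq _ _) hu hv.
    by case: (emb u' u v v (etrans e1 (esym e2))).
  - have e1 : pjoin inc (uU u) (vV v') = Some l := pjoin_eq pp (uv_neq _ _) hu hv'.
    have e2 : pjoin inc (uU u) (vV v) = Some l := pjoin_eq pp (uv_neq _ _) hu hv.
    by case: (emb u u v' v (etrans e1 (esym e2))). }
have two : 1 < q - n by [].
pose u0 : 'I_(q-n) := Ordinal (ltnW two).
pose u1 : 'I_(q-n) := Ordinal two.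
have u01 : u0 != u1 by [].
have uu_neq u u' : u != u' -> uU u != uU u'.
{ by move=> h; apply/eqP => /uu_inj e; rewrite e eqxx in h. }
have [lU HlU] := exists_join pp (uu_neq _ _ u01).
have [hu0 hu1] := andP HlU.
have onlU u : inc (uU u) lU.
{ case: (eqVneq u u0) => [->//|nu].
  have [m /andP[m1 m2]] := exists_join pp (uu_neq _ _ nu).
  suff -> : lU = m by [].
  apply/eqP; apply/negP => /negP mU.
  pose g v := odflt lU [pick l | inc (uU u0) l && inc (vV v) l].
  have g_spec v : inc (uU u0) (g v) && inc (vV v) (g v) := pick_join pp lU (uv_neq u0 v).
  have g_inj : injective g.
  { move=> v v' e; have /andP[a1 a2] := g_spec v; have /andP[b1 b2] := g_spec v'.
    have a2' : inc (vV v) (g v') := eq_ind _ (fun l => inc (vV v) l) a2 _ e.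
    by have [_ hh] := F1 _ _ _ b1 b2; exact: hh _ a2'. }
  pose S := [set l | inc (uU u0) l].
  have cS : #|S| = q.+1 by case: pp => _ _ hh _ _; exact: hh.
  have sub : g @: setT \subset S :\ m :\ lU.
  { apply/subsetP => l /imsetP [v _ ->]; have /andP[a1 a2] := g_spec v.
    rewrite !inE a1 andbT; apply/andP; split; apply/eqP => e; rewrite e in a1 a2.
    - by have [hh _] := F1 _ _ _ a1 a2; have := hh _ hu1; move/eqP; rewrite eq_sym (negbTE u01).
    - by have [hh _] := F1 _ _ _ a1 a2; have := hh _ m1; move/eqP; rewrite (negbTE nu). }
  have := subset_leq_card sub.
  rewrite card_imset // cardsT card_ord.
  have := cardsD1 m S; have := cardsD1 lU (S :\ m).
  rewrite !inE mU hu0 m2 cS /=. exact: ar1. }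
have notV v : ~~ inc (vV v) lU.
{ apply/negP => h; have [hh _] := F1 _ _ _ hu0 h; have := hh _ hu1; move/eqP.
  by rewrite eq_sym (negbTE u01). }
pose lUset := [set x | inc x lU].
pose Uset := uU @: [set: 'I_(q - n)].
have cU : #|Uset| = q - n by rewrite card_imset // cardsT card_ord.
have clU : #|lUset| = q.+1 by case: pp => _ hh _ _ _; exact: hh.
have UlU : Uset \subset lUset.
{ by apply/subsetP => x /imsetP [u _ ->]; rewrite inE. }
case: (boolP [exists m, [forall v, inc (vV v) m]]) => [/existsP [m /forallP Hm] | Hnc].
{ exists lU, m; case=> [u|v]; [by rewrite onlU | by rewrite (Hm v) orbT]. }
exfalso.
have Hnc' m : exists v, ~~ inc (vV v) m.
{ move: Hnc; rewrite negb_exists => /forallP /(_ m); rewrite negb_forall.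
  by case/existsP => v h; exists v. }
pose h l := odflt (uU u0) [pick x | inc x l && inc x lU].
pose j p p' := odflt lU [pick l | inc p l && inc p' l].
have h_spec l : l != lU -> inc (h l) l && inc (h l) lU := fun e => pick_meet pp (uU u0) e.
have j_spec p p' : p != p' -> inc p (j p p') && inc p' (j p p') := fun e => pick_join pp lU e.
have K w v : v != w -> [/\ inc (vV w) (j (vV w) (vV v)), inc (vV v) (j (vV w) (vV v)),
    j (vV w) (vV v) != lU, inc (h (j (vV w) (vV v))) (j (vV w) (vV v)) &&
    inc (h (j (vV w) (vV v))) lU & h (j (vV w) (vV v)) \notin Uset].
{ move=> nvw.
  have nw : vV w != vV v by apply/eqP => /vv_inj e; rewrite e eqxx in nvw.
  have /andP[l1 l2] := j_spec _ _ nw.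
  have lnU : j (vV w) (vV v) != lU.
  { apply/eqP => e; rewrite e in l2; by rewrite (negbTE (notV v)) in l2. }
  have /andP[x1 x2] := h_spec _ lnU.
  split => //; first by rewrite x1 x2.
  apply/imsetP => [[u _ e]]; rewrite e in x1.
  have [_ hh] := F1 _ _ _ x1 l1. by have := hh _ l2; move/eqP; rewrite (negbTE nvw). }
have A m : m != lU -> h m \notin Uset -> #|[set v | inc (vV v) m]| <= n.
{ move=> mU hmU.
  have [v1 nv1] := Hnc' m.
  have /andP[hm1 hm2] := h_spec _ mU.
  pose F v := h (j (vV v1) (vV v)).
  have ne1 v : v \in [set v | inc (vV v) m] -> v != v1.
  { rewrite inE => hv; apply/eqP => e; by rewrite -e hv in nv1. }
  have sub : F @: [set v | inc (vV v) m] \subset (lUset :\ h m) :\: Uset.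
  { apply/subsetP => x /imsetP [v hv ->].
    move: (K v1 v (ne1 v hv)); set l := j _ (vV v); case=> l1 l2 lnU /andP[x1 x2] xU.
    rewrite in_setD in_setD1 /lUset inE.
    apply/andP; split; first exact: xU.
    apply/andP; split; last exact: x2.
    apply/eqP => e.
    have ee : h l = h m := e.
    have hml : inc (h m) l := eq_ind _ (fun p => inc p l) x1 _ ee.
    have nx : h m != vV v by apply/eqP => e'; move: (notV v); rewrite -e' hm2.
    move: hv; rewrite inE => hv.
    have lm : l = m := line_uniq pp nx hml l2 hm1 hv.
    by move: nv1; rewrite -lm l1. }
  have inj : {in [set v | inc (vV v) m] &, injective F}.
  { move=> v v' hv hv' e.
    move: (K v1 v (ne1 v hv)); set l := j _ (vV v); case=> l1 l2 lnU /andP[x1 x2] _.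
    move: (K v1 v' (ne1 v' hv')); set l' := j _ (vV v'); case=> l1' l2' lnU' /andP[x1' x2'] _.
    have ee : h l = h l' := e.
    have nx : vV v1 != h l by apply/eqP => e'; move: (notV v1); rewrite e' x2.
    have x1'' : inc (h l) l' := eq_ind _ (fun p => inc p l') x1' _ (esym ee).
    have ll : l = l' := line_uniq pp nx l1 x1 l1' x1''.
    case: (eqVneq v v') => // nvv'; exfalso.
    have nvv : vV v != vV v' by apply/eqP => /vv_inj e'; rewrite e' eqxx in nvv'.
    move: hv hv'; rewrite !inE => hv hv'.
    have l2'' : inc (vV v') l by rewrite ll.
    have lm : l = m := line_uniq pp nvv l2 l2'' hv hv'.
    by move: nv1; rewrite -lm l1. }
  rewrite -(card_in_imset inj); apply: leq_trans (subset_leq_card sub) _.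
  have Us : Uset \subset lUset :\ h m.
  { apply/subsetP => x hx; rewrite in_setD1 (subsetP UlU _ hx) andbT.
    by apply/eqP => e; move: hmU; rewrite -e hx. }
  rewrite cardsD (setIidPr Us) cU.
  have := cardsD1 (h m) lUset; rewrite /lUset inE hm2 -/lUset clU. exact: ar2 (ar5 Hqn). }
have q0 : 0 < q := ar6 Hqn.
pose v0 : 'I_q := Ordinal q0.
have UlU' : lUset :&: Uset = Uset by apply/setIidPr.
have cW : #|lUset :\: Uset| = n.+1 by rewrite cardsD UlU' cU clU; exact: ar7 (ar5 Hqn).
pose G v := h (j (vV v0) (vV v)).
have GW v : v \in [set: 'I_q] :\ v0 -> G v \in lUset :\: Uset.
{ move=> /setD1P [nv _]. move: (K v0 v nv) => [_ _ _ /andP[_ x2] xU].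
  rewrite in_setD /lUset inE; apply/andP; split; [exact: xU | exact: x2]. }
have fib x : x \in lUset :\: Uset -> #|[set v | (v \in [set: 'I_q] :\ v0) && (G v == x)]| <= n - 1.
{ rewrite in_setD => /andP[xU]; rewrite inE => xl.
  have nx : vV v0 != x by apply/eqP => e; move: (notV v0); rewrite e xl.
  have /andP[m1 m2] := j_spec _ _ nx. move: m1 m2; set m := j _ x => m1 m2.
  have mU : m != lU by apply/eqP => e; move: (notV v0); rewrite -e m1.
  have /andP[hm1 hm2] := h_spec _ mU.
  have hx : h m = x := point_uniq pp mU hm1 hm2 m2 xl.
  have cm := A m mU ltac:(by rewrite hx).
  have sub : [set v | (v \in [set: 'I_q] :\ v0) && (G v == x)] \subset [set v | inc (vV v) m] :\ v0.
  { apply/subsetP => v; rewrite !inE andbT => /andP[nv /eqP Gx].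
    rewrite nv /=. move: (K v0 v nv) => [l1 l2 lnU /andP[x1 x2] _].
    have x1' : inc x (j (vV v0) (vV v)) := eq_ind _ (fun p => inc p (j (vV v0) (vV v))) x1 _ Gx.
    have -> : m = j (vV v0) (vV v) := line_uniq pp nx m1 m2 l1 x1'.
    exact: l2. }
  apply: leq_trans (subset_leq_card sub) _.
  have := cardsD1 v0 [set v | inc (vV v) m]; rewrite inE m1 => e; exact: ar3 e cm. }
have : q - 1 <= n.+1 * (n - 1).
{ have -> : q - 1 = #|[set: 'I_q] :\ v0|.
    by have := cardsD1 v0 [set: 'I_q]; rewrite cardsT card_ord inE; exact: ar4.
  rewrite -sum1_card (partition_big G (fun x => x \in lUset :\: Uset)) /=; last exact: GW.
  rewrite -cW -sum_nat_const; apply: leq_sum => x xW; rewrite sum1dep_card; exact: fib. }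
exact: ar8.
Qed.
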